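(* Let $K\subset M$ be closed subsets of $\mathbb{R}^2$. Then the following conditions are equivalent: (i) $M=K\cup C$, where $C$ is the union of a system of components of $\mathbb{R}^2\setminus K$; (ii) $\partial M\subset\partial K$. Moreover, if these conditions hold and $K\in\mathcal{D}_2$, then $M\in\mathcal{D}_2$.
   Context: A function on an open convex set $C\subset\mathbb{R}^d$ is DC if it is the difference of two convex functions on $C$. $\mathcal{D}_2$ denotes the family consisting of $\varnothing$ together with all nonempty closed sets $A\subset\mathbb{R}^2$ whose distance function $d_A=\operatorname{dist}(\cdot,A)$ is DC on $\mathbb{R}^2$. *)

(* Defs.v *)
(* the plane R^2 is R * R (product topology =
   Euclidean topology), R : realType. *)
From HB Require Import structures.
From mathcomp Require Import all_boot all_order all_algebra.
From mathcomp Require Import all_classical all_reals all_analysis.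
Set Implicit Arguments. Unset Strict Implicit. Unset Printing Implicit Defensive.
Import Order.TTheory GRing.Theory Num.Theory numFieldNormedType.Exports.
Local Open Scope classical_set_scope.
Local Open Scope ring_scope.

Section Plane.
Variable R : realType.
Local Notation P := (R * R)%type.

Definition boundary (A : set P) : set P := closure A `\` interior A.

Definition edist (x y : P) : R :=
  Num.sqrt ((x.1 - y.1) ^+ 2 + (x.2 - y.2) ^+ 2).

Definition dist_set (A : set P) (x : P) : R := inf [set edist x a | a in A].

Definition pcomb (t : R) (x y : P) : P :=
  (t * x.1 + (1 - t) * y.1, t * x.2 + (1 - t) * y.2).

Definition convex_fun2 (f : P -> R) : Prop :=
  forall (x y : P) (t : R), 0 <= t -> t <= 1 ->
    f (pcomb t x y) <= t * f x + (1 - t) * f y.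

Definition DC2 (f : P -> R) : Prop :=
  exists g h : P -> R, convex_fun2 g /\ convex_fun2 h /\ forall x, f x = g x - h x.

Definition D2 (A : set P) : Prop :=
  A = set0 \/ (closed A /\ A !=set0 /\ DC2 (dist_set A)).

Definition is_component (U C : set P) : Prop :=
  exists2 x, U x & C = connected_component U x.

End Plane.

(* Main.v *)
Require Import Defs.
From HB Require Import structures.
From mathcomp Require Import all_boot all_order all_algebra.
From mathcomp Require Import all_classical all_reals all_analysis.
From mathcomp Require Import ring lra.
Import Order.TTheory GRing.Theory Num.Theory numFieldNormedType.Exports.
Local Open Scope classical_set_scope.
Local Open Scope ring_scope.
Lemma pcomb_cont (R : realType) (p q : R * R) : continuous (fun s : R => pcomb s p q).
Proof.
move=> s; rewrite /pcomb.
have H1 : (fun s => s * p.1 + (1 - s) * q.1) @ s --> (s * p.1 + (1 - s) * q.1).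
  apply: cvgD; first exact: cvgMl cvg_id.
  apply: cvgMl; apply: cvgB; [exact: cvg_cst| exact: cvg_id].
have H2 : (fun s => s * p.2 + (1 - s) * q.2) @ s --> (s * p.2 + (1 - s) * q.2).
  apply: cvgD; first exact: cvgMl cvg_id.
  apply: cvgMl; apply: cvgB; [exact: cvg_cst| exact: cvg_id].
exact: (cvg_pair H1 H2).
Qed.

Lemma pcomb1 (R : realType) (p q : R * R) : pcomb 1 p q = p.
Proof. by rewrite /pcomb !mul1r subrr !mul0r !addr0; case: p. Qed.
Lemma pcomb0 (R : realType) (p q : R * R) : pcomb 0 p q = q.
Proof. by rewrite /pcomb !mul0r subr0 !mul1r !add0r; case: q. Qed.

Lemma seg_comp (R : realType) (A : set (R * R)) (p q : R * R) :
  (forall s : R, 0 <= s <= 1 -> A (pcomb s p q)) ->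
  connected_component A p q.
Proof.
move=> H.
have h01 : forall s : R, `[0, 1]%classic s <-> 0 <= s <= 1.
  by move=> s; rewrite /= in_itv.
apply: (@connected_component_max _ A ((fun s => pcomb s p q) @` `[0, 1]%classic)).
- by exists 1; [apply/h01; rewrite ler01 lexx | exact: pcomb1].
- by move=> _ [s /h01 hs <-]; apply: H.
- apply: connected_continuous_connected; first exact: segment_connected.
  exact/continuous_subspaceT/pcomb_cont.
- by exists 0; [apply/h01; rewrite ler01 lexx | exact: pcomb0].
Qed.

Lemma seg_hit (R : realType) (K M : set (R * R)) (S : set (set (R * R))) :
  (forall C, S C -> is_component (~` K) C) ->
  M = K `|` \bigcup_(C in S) C ->
  forall p q, ~ M p -> M q -> exists s, 0 <= s <= 1 /\ K (pcomb s p q).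
Proof.
move=> HS HM p q Mp Mq; apply: contrapT => Hn.
have H : forall s : R, 0 <= s <= 1 -> (~` K) (pcomb s p q).
  by move=> s hs Ks; apply: Hn; exists s.
have cpq := @seg_comp _ _ _ _ H.
have nKp : (~` K) p by have := H 1; rewrite pcomb1 ler01 lexx; apply.
have nKq : (~` K) q by have := H 0; rewrite pcomb0 ler01 lexx; apply.
move: Mq; rewrite HM => -[//|[C SC Cq]].
have [x0 _ Cx0] := HS C SC.
apply: Mp; rewrite HM; right; exists C => //.
have e1 := same_connected_component cpq.
have e2 : connected_component (~` K) x0 q by rewrite -Cx0.
have e3 := same_connected_component e2.
by rewrite Cx0 e3 -e1; apply: connected_component_refl.
Qed.

Lemma edist_ge0 (R : realType) (x y : R * R) : 0 <= Defs.edist x y.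
Proof. exact: sqrtr_ge0. Qed.

Lemma edist_xx (R : realType) (x : R * R) : Defs.edist x x = 0.
Proof. by rewrite /Defs.edist !subrr expr0n /= addr0 sqrtr0. Qed.

Lemma edist_pcomb (R : realType) (x m : R * R) s : 0 <= s <= 1 ->
  Defs.edist x (pcomb s x m) <= Defs.edist x m.
Proof.
move=> /andP[s0 s1]; rewrite /Defs.edist /pcomb /=; apply: ler_wsqrtr.
set a := x.1; set b := x.2; set c := m.1; set d := m.2.
have -> : a - (s * a + (1 - s) * c) = (1 - s) * (a - c) by ring.
have -> : b - (s * b + (1 - s) * d) = (1 - s) * (b - d) by ring.
rewrite !exprMn -mulrDr.
have h : (1 - s) ^+ 2 <= 1 by nra.
have h2 : 0 <= (a - c) ^+ 2 + (b - d) ^+ 2 by rewrite addr_ge0 // sqr_ge0.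
by rewrite -[X in _ <= X]mul1r ler_wpM2r.
Qed.

Lemma dist_ge0 (R : realType) (A : set (R * R)) x : A !=set0 -> 0 <= dist_set A x.
Proof.
move=> [a Aa]; apply: lb_le_inf; first by exists (Defs.edist x a), a.
by move=> _ [b _ <-]; exact: edist_ge0.
Qed.

Lemma dist_le (R : realType) (A : set (R * R)) x a : A a -> dist_set A x <= Defs.edist x a.
Proof.
move=> Aa; apply: ge_inf; last by exists a.
by exists 0 => _ [b _ <-]; exact: edist_ge0.
Qed.

Lemma dist_on (R : realType) (A : set (R * R)) x : A x -> dist_set A x = 0.
Proof.
move=> Ax; apply/eqP; rewrite eq_le dist_ge0; last by exists x.
by rewrite -(@edist_xx _ x) dist_le.
Qed.

Lemma dist_out (R : realType) (K M : set (R * R)) (S : set (set (R * R))) :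
  (forall C, S C -> is_component (~` K) C) ->
  M = K `|` \bigcup_(C in S) C -> K !=set0 ->
  forall x, ~ M x -> dist_set M x = dist_set K x.
Proof.
move=> HS HM [k0 Kk0] x Mx.
have KM : K `<=` M by rewrite HM => y Ky; left.
apply/eqP; rewrite eq_le; apply/andP; split.
- apply: lb_le_inf; first by exists (Defs.edist x k0), k0.
  by move=> _ [k Kk <-]; apply: dist_le; apply: KM.
- apply: lb_le_inf; first by exists (Defs.edist x k0), k0 => //; apply: KM.
  move=> _ [m Mm <-].
  have [s [hs Ks]] := @seg_hit _ _ _ _ HS HM _ _ Mx Mm.
  apply: le_trans (@edist_pcomb _ x m s hs).
  exact: dist_le.
Qed.

Lemma coord_id (R : realType) (t s u x1 y1 : R) :
  t * (1 - u) + (1 - t) * (1 - s) != 0 ->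
  let l := t * (1 - u) / (t * (1 - u) + (1 - t) * (1 - s)) in
  let z1 := t * x1 + (1 - t) * y1 in
  l * (s * z1 + (1 - s) * x1) + (1 - l) * (u * z1 + (1 - u) * y1) = z1.
Proof. move=> hD l z1; rewrite /l /z1; field; exact: hD. Qed.

Lemma lam_bounds (R : realType) (t s u : R) :
  0 <= t <= 1 -> 0 <= s < 1 -> 0 <= u < 1 ->
  let D := t * (1 - u) + (1 - t) * (1 - s) in
  let l := t * (1 - u) / D in
  0 < D /\ 0 <= l /\ 0 <= 1 - l.
Proof.
move=> /andP[t0 t1] /andP[s0 s1] /andP[u0 u1] D l.
have Dp : 0 < D.
  rewrite /D; have [->|tn0] := eqVneq t 0; first by rewrite mul0r add0r subr0 mul1r subr_gt0.
  apply: ltr_pwDl.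
    by apply: mulr_gt0; [rewrite lt0r tn0 | rewrite subr_gt0].
  by apply: mulr_ge0; rewrite subr_ge0 // ltW.
have l0 : 0 <= l by rewrite /l divr_ge0 //; nra.
have l1 : 0 <= 1 - l.
  rewrite subr_ge0 /l ler_pdivrMr // mul1r /D; nra.
by [].
Qed.

Lemma arith_main (R : realType) (t s u Fz Fx Fy Fa Fb : R) :
  0 <= t <= 1 -> 0 <= s < 1 -> 0 <= u < 1 ->
  let D := t * (1 - u) + (1 - t) * (1 - s) in
  let l := t * (1 - u) / D in
  Fz <= l * Fa + (1 - l) * Fb ->
  Fa <= s * Fz + (1 - s) * Fx ->
  Fb <= u * Fz + (1 - u) * Fy ->
  Fz <= t * Fx + (1 - t) * Fy.
Proof.
move=> ht hs hu D l H Ha Hb.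
have [Dp [l0 l1]] : 0 < D /\ 0 <= l /\ 0 <= 1 - l by apply: lam_bounds.
move: ht hs hu => /andP[t0 t1] /andP[s0 s1] /andP[u0 u1].
have H2 : Fz <= l * (s * Fz + (1 - s) * Fx) + (1 - l) * (u * Fz + (1 - u) * Fy).
  apply: (le_trans H); apply: lerD; exact: ler_wpM2l.
have e1 : l * D = t * (1 - u) by rewrite /l mulrVK // unitfE gt_eqF.
have e2 : (1 - l) * D = (1 - t) * (1 - s) by rewrite mulrBl e1 mul1r /D; ring.
have H3 : D * Fz <= t * (1 - u) * (s * Fz + (1 - s) * Fx) + (1 - t) * (1 - s) * (u * Fz + (1 - u) * Fy).
  apply: le_trans (ler_wpM2l (ltW Dp) H2) _.
  by rewrite mulrDr (mulrA D l) (mulrA D (1 - l)) [D * l]mulrC e1 [D * (1 - l)]mulrC e2.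
have e3 : (1 - s) * (1 - u) * (t * Fx + (1 - t) * Fy - Fz) =
  t * (1 - u) * (s * Fz + (1 - s) * Fx) + (1 - t) * (1 - s) * (u * Fz + (1 - u) * Fy) - D * Fz.
  by rewrite /D; ring.
have : 0 <= (1 - s) * (1 - u) * (t * Fx + (1 - t) * Fy - Fz) by rewrite e3 subr_ge0.
rewrite pmulr_rge0 ?subr_ge0 //; apply: mulr_gt0; rewrite subr_gt0 //.
Qed.

Lemma F_convex (R : realType) (K M : set (R * R)) (S : set (set (R * R)))
  (g h : R * R -> R) :
  (forall C, S C -> is_component (~` K) C) ->
  M = K `|` \bigcup_(C in S) C -> K !=set0 ->
  convex_fun2 g -> convex_fun2 h ->
  (forall x, dist_set K x = g x - h x) ->
  convex_fun2 (fun x => g x + h x + dist_set M x).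
Proof.
move=> HS HM Kne cg ch hdk.
set F := fun x => g x + h x + dist_set M x.
have KM : K `<=` M by rewrite HM => y Ky; left.
have Mne : M !=set0 by case: Kne => k Kk; exists k; apply: KM.
have hG : forall x y t, 0 <= t -> t <= 1 ->
    g (pcomb t x y) + h (pcomb t x y) <= t * (g x + h x) + (1 - t) * (g y + h y).
  move=> x y t t0 t1; apply: le_trans (lerD (cg x y t t0 t1) (ch x y t t0 t1)) _.
  by rewrite le_eqVlt; apply/orP; left; apply/eqP; ring.
have hB : forall x y t, 0 <= t -> t <= 1 ->
    g (pcomb t x y) + g (pcomb t x y) <= t * (g x + g x) + (1 - t) * (g y + g y).
  move=> x y t t0 t1; apply: le_trans (lerD (cg x y t t0 t1) (cg x y t t0 t1)) _.
  by rewrite le_eqVlt; apply/orP; left; apply/eqP; ring.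
have FG : forall x, g x + h x <= F x by move=> x; rewrite /F lerDl dist_ge0.
have FM : forall x, M x -> F x = g x + h x.
  by move=> x Mx; rewrite /F dist_on // addr0.
have FB : forall x, ~ M x \/ K x -> F x = g x + g x.
  move=> x [Mx|Kx].
    by rewrite /F (@dist_out _ _ _ _ HS HM Kne x Mx) hdk; ring.
  have := hdk x; rewrite dist_on // => e0.
  have e : h x = g x by lra.
  by rewrite /F dist_on ?e ?addr0 //; exact: (KM x Kx).
have endp : forall z x, ~ M z -> exists s : R, 0 <= s < 1 /\
    F (pcomb s z x) = g (pcomb s z x) + g (pcomb s z x) /\
    F (pcomb s z x) <= s * F z + (1 - s) * F x.
  move=> z x Mz; have [Mx|Mx] := pselect (M x).
    have [s [/andP[s0 s1] Ks]] := @seg_hit _ _ _ _ HS HM _ _ Mz Mx.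
    have s1' : s < 1.
      rewrite lt_neqAle s1 andbT; apply/eqP => s1e; apply: Mz.
      by move: Ks; rewrite s1e pcomb1; exact: KM.
    exists s; split; first by rewrite s0 s1'.
    split; first by apply: FB; right.
    rewrite FM; last by apply: KM.
    apply: le_trans (hG z x s s0 s1) _.
    apply: lerD; apply: ler_wpM2l => //; first by rewrite subr_ge0.
  exists 0; rewrite pcomb0 lexx ltr01; split => //; split; first by apply: FB; left.
  by rewrite mul0r add0r subr0 mul1r.
move=> x y t t0 t1.
have [Mz|Mz] := pselect (M (pcomb t x y)).
  rewrite -/(F _) FM //; apply: le_trans (hG x y t t0 t1) _.
  apply: lerD; apply: ler_wpM2l => //; by rewrite subr_ge0.
have [s [hs [Fa1 Fa2]]] := endp _ x Mz.
have [u [hu [Fb1 Fb2]]] := endp _ y Mz.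
have ht : 0 <= t <= 1 by rewrite t0 t1.
change (F (pcomb t x y) <= t * F x + (1 - t) * F y).
apply: (@arith_main _ t s u _ _ _ _ _ ht hs hu _ Fa2 Fb2).
have [Dp [l0 l1]] := @lam_bounds _ _ _ _ ht hs hu.
set D := t * (1 - u) + (1 - t) * (1 - s).
set l := t * (1 - u) / D.
have pe : pcomb l (pcomb s (pcomb t x y) x) (pcomb u (pcomb t x y) y) = pcomb t x y.
  rewrite /pcomb /=; congr (_, _); apply: coord_id; exact: lt0r_neq0 Dp.
rewrite -/(F _) (FB _ (or_introl Mz)) Fa1 Fb1 -{1 2}pe.
have l1' : l <= 1 by rewrite -subr_ge0.
exact: hB.
Qed.

Lemma ballR_comb (R : realType) (a b e s : R) : 0 <= s <= 1 -> ball a e b ->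
  ball a e (s * a + (1 - s) * b).
Proof.
move=> /andP[s0 s1]; rewrite -ball_normE /ball_ /= => hab.
have -> : a - (s * a + (1 - s) * b) = (1 - s) * (a - b) by ring.
rewrite normrM ger0_norm ?subr_ge0 //.
apply: le_lt_trans hab; rewrite -[X in _ <= X]mul1r ler_wpM2r //.
  by rewrite lerBlDr lerDl.
Qed.

Lemma ball_comb (R : realType) (x z : R * R) e s : 0 <= s <= 1 -> ball x e z ->
  ball x e (pcomb s x z).
Proof.
move=> hs [h1 h2]; split; exact: ballR_comb.
Qed.

Lemma comp_ball (R : realType) (K : set (R * R)) x : closed K -> ~ K x ->
  exists e, 0 < e /\ ball x e `<=` connected_component (~` K) x.
Proof.
move=> cK nKx.
have : nbhs x (~` K) by apply: open_nbhs_nbhs; split => //; exact: closed_openC.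
move=> /nbhs_ballP [e e0 He]; exists e; split => // z xz.
apply: seg_comp => s hs; apply: He; exact: ball_comb.
Qed.

Lemma conv_add (R : realType) (g h : R * R -> R) :
  convex_fun2 g -> convex_fun2 h -> convex_fun2 (fun x => g x + h x).
Proof.
move=> cg ch x y t t0 t1; apply: le_trans (lerD (cg x y t t0 t1) (ch x y t t0 t1)) _.
by rewrite le_eqVlt; apply/orP; left; apply/eqP; ring.
Qed.

Theorem lemma4p14 (R : realType) (K M : set (R * R)) :
  closed K -> closed M -> K `<=` M ->
  let cond_i := exists S : set (set (R * R)),
      (forall C, S C -> is_component (~` K) C) /\
      M = K `|` \bigcup_(C in S) C in
  let cond_ii := boundary M `<=` boundary K in
  (cond_i <-> cond_ii) /\ (cond_i -> cond_ii -> D2 K -> D2 M).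
Proof.
move=> cK cM KM cond_i cond_ii.
have clM : closure M = M by apply/esym/closure_id.
have clK : closure K = K by apply/esym/closure_id.
split; first split.
- move=> [S [HS HM]] x [clMx nintMx].
  rewrite clM in clMx.
  have Kx : K x.
    apply: contrapT => nKx; apply: nintMx.
    move: clMx; rewrite HM => -[//|[C SC Cx]].
    have [x0 _ Cx0] := HS C SC.
    have [e [e0 He]] := @comp_ball _ K x cK nKx.
    apply/nbhs_ballP; exists e => // z /He xz.
    right; exists C => //.
    rewrite Cx0; have e1 : connected_component (~` K) x0 x by rewrite -Cx0.
    by rewrite (same_connected_component e1).
  split; first by rewrite clK.
  by move=> iK; apply: nintMx; apply: (interiorS KM).
- move=> Hb.
  exists [set C | is_component (~` K) C /\ C `<=` M]; split; first by move=> C [].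
  apply/seteqP; split; last first.
    by move=> x [Kx|[C [_ CM] Cx]]; [exact: KM | exact: CM].
  move=> x Mx; have [Kx|nKx] := pselect (K x); first by left.
  right; exists (connected_component (~` K) x); last exact: connected_component_refl.
  split; first by exists x.
  have cc := @component_connected _ (~` K) x.
  suff : connected_component (~` K) x `&` M = connected_component (~` K) x.
    by move=> <- y [].
  apply: cc.
  - by exists x; split => //; exact: connected_component_refl.
  - exists (interior M); first exact: open_interior.
    apply/seteqP; split => y [Cy My]; split => //; last exact: interior_subset.
    apply: contrapT => niy.
    have : boundary K y by apply: Hb; split => //; rewrite clM.
    move=> [+ _]; rewrite clK; exact: (connected_component_sub Cy).
  - by exists M.
- move=> [S [HS HM]] _ [K0|[_ [Kne [g [h [cg [ch hdk]]]]]]].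
  + have [M0|M0] := pselect (M = set0); first by left.
    have /set0P [m Mm] : M != set0 by apply/eqP.
    have Mall : forall x, M x.
      move=> x; apply: contrapT => Mx.
      have [s [_ Ks]] := @seg_hit _ _ _ _ HS HM _ _ Mx Mm.
      by move: Ks; rewrite K0.
    right; split => //; split; first by exists m.
    exists (fun _ => 0), (fun _ => 0); split; last split.
    * by move=> x y t _ _; rewrite !mulr0 addr0.
    * by move=> x y t _ _; rewrite !mulr0 addr0.
    * by move=> x; rewrite dist_on // subr0.
  + right; split => //; split.
      by case: Kne => k Kk; exists k; apply: KM.
    exists (fun x => g x + h x + dist_set M x), (fun x => g x + h x).
    split; first exact: (@F_convex _ K M S g h HS HM Kne cg ch hdk).
    split; first exact: conv_add.
    by move=> x; ring.
Qed.
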